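(* Let $A, B$ be sets with $\mathbf{P}(B) \subseteq \mathcal{P}(B)\setminus\{\varnothing\}$ a set of non-empty predicates on $B$, and let $R \subseteq A \times B$ be a relation. Then $R$ is belief-complete with respect to $\mathbf{P}(B)$ if and only if, for every set $C$, every set $\mathbf{P}(C)\subseteq\mathcal{P}(C)\setminus\{\varnothing\}$ of non-empty predicates on $C$, and every relation $S \subseteq B\times C$ such that (1) $S$ is assumption-complete with respect to $\mathbf{P}(C)$, and (2) $\boxplus_S p = \{ y\in B \mid S(y) = p\} \in \mathbf{P}(B)$ for every $p\in\mathbf{P}(C)$ (where $S(y)=\{z \mid S(y,z)\}$), the relational composite $R;S \subseteq A\times C$, given by $(R;S)(x,z)\iff\exists y.\,[R(x,y)\wedge S(y,z)]$, is assumption-complete with respect to $\mathbf{P}(C)$.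
   Context: A relation $R \subseteq X \times Y$ is assumption-complete with respect to a set $\mathbf{P}(Y)$ of subsets of $Y$ if for every $p \in \mathbf{P}(Y)$ there is $x \in X$ such that for all $y \in Y$: $R(x,y) \iff y \in p$. It is belief-complete with respect to $\mathbf{P}(Y)$ if for every $p \in \mathbf{P}(Y)$ there is $x \in X$ such that for all $y\in Y$, $R(x,y)\Rightarrow y\in p$, and moreover there exists $y$ with $R(x,y)$. *)

(* Defs.v *)
From mathcomp Require Import all_boot boolp classical_sets.
Set Implicit Arguments. Unset Strict Implicit. Unset Printing Implicit Defensive.
Local Open Scope classical_set_scope.

Definition assumption_complete (X Y : Type) (R : X -> Y -> Prop)
  (PY : set (set Y)) : Prop :=
  forall p, PY p -> exists x : X, forall y : Y, R x y <-> p y.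

Definition belief_complete (X Y : Type) (R : X -> Y -> Prop)
  (PY : set (set Y)) : Prop :=
  forall p, PY p -> exists x : X,
    (forall y : Y, R x y -> p y) /\ (exists y : Y, R x y).

Definition rel_image (Y Z : Type) (S : Y -> Z -> Prop) (y : Y) : set Z :=
  [set z | S y z].

Definition boxplus (Y Z : Type) (S : Y -> Z -> Prop) (p : set Z) : set Y :=
  [set y | rel_image S y = p].

Definition rel_comp (X Y Z : Type) (R : X -> Y -> Prop) (S : Y -> Z -> Prop)
  : X -> Z -> Prop :=
  fun x z => exists y, R x y /\ S y z.

Definition nonempty_preds (Y : Type) (PY : set (set Y)) : Prop :=
  forall p, PY p -> exists y, p y.

(* Main.v *)
Require Import Defs.
From mathcomp Require Import all_boot boolp classical_sets.

Theorem theorem1 (A B : Type) (PB : set (set B)) (hPB : nonempty_preds PB)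
  (R : A -> B -> Prop) :
  belief_complete R PB <->
  (forall (C : Type) (PC : set (set C)), nonempty_preds PC ->
     forall S : B -> C -> Prop,
       assumption_complete S PC ->
       (forall p, PC p -> PB (boxplus S p)) ->
       assumption_complete (rel_comp R S) PC).
Proof.
split.
- move=> hb C PC _ S _ hbox p Pp.
  have [x [Hx [y0 Ry0]]] := hb _ (hbox p Pp).
  exists x => z; split.
  + move=> [y [Rxy Syz]]. have E : rel_image S y = p := Hx y Rxy.
    by rewrite -E.
  + move=> pz. exists y0; split => //.
    have E : rel_image S y0 = p := Hx y0 Ry0.
    by rewrite -E in pz.
- move=> H p Pp.
  pose q : set (option B) := fun o => match o with Some z => p z | None => False end.
  pose S : B -> option B -> Prop := fun y o =>
    match o with Some z => p y /\ p z | None => ~ p y end.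
  have [z0 pz0] := hPB p Pp.
  have Sq : forall y, rel_image S y = q <-> p y.
    move=> y; split.
    + move=> E. apply: contrapT => npy.
      have : rel_image S y None by [].
      by rewrite E.
    + move=> py. apply: funext => o. apply: propext.
      case: o => [z|] /=; rewrite /rel_image /=; tauto.
  have h1 : nonempty_preds (fun r : set (option B) => r = q).
    by move=> r ->; exists (Some z0).
  have h2 : assumption_complete S (fun r : set (option B) => r = q).
    move=> r ->; exists z0 => o; case: o => [z|] /=; tauto.
  have h3 : forall r, (fun r : set (option B) => r = q) r -> PB (boxplus S r).
    move=> r /= ->. have -> : boxplus S q = p; last done.
    apply: funext => y. apply: propext. exact: Sq.
  have [x Hx] := H (option B) _ h1 S h2 h3 q erefl.
  exists x; split.
  + move=> y Rxy. apply: contrapT => npy.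
    by apply/(Hx None); exists y.
  + have [y [Rxy _]] := (proj2 (Hx (Some z0)) pz0). by exists y.
Qed.
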